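(* If there exists a ring satisfying (NK), then there exists a ring $A$ which is an algebra over either $\mathbb Z$ or $\mathbb Z_p$ for some prime number $p$, which is generated as such an algebra by two principally nilpotent elements, and which satisfies (NK).
   Context: All rings are associative with unit. A right ideal is nil if all its elements are nilpotent. A ring satisfies the condition (NK) if it contains two nil right ideals whose sum is not nil. An element $a$ of a ring $R$ is principally nilpotent if $aR$ is a nil right ideal. *)

(* Defs.v *)
From HB Require Import structures.
From mathcomp Require Import all_boot all_order all_algebra.
Set Implicit Arguments. Unset Strict Implicit. Unset Printing Implicit Defensive.
Import GRing.Theory.
Local Open Scope ring_scope.

Definition nilpotent_el (R : nzRingType) (x : R) : Prop := exists n : nat, x ^+ n = 0.

Definition right_ideal (R : nzRingType) (I : R -> Prop) : Prop :=
  [/\ I 0, (forall x y, I x -> I y -> I (x - y)) & (forall x r, I x -> I (x * r))].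

Definition nil_set (R : nzRingType) (I : R -> Prop) : Prop :=
  forall x, I x -> nilpotent_el x.

Definition sum_set (R : nzRingType) (I J : R -> Prop) : R -> Prop :=
  fun z => exists x y, [/\ I x, J y & z = x + y].

Definition NK (R : nzRingType) : Prop :=
  exists I J : R -> Prop, [/\ right_ideal I, right_ideal J, nil_set I, nil_set J
                           & ~ nil_set (sum_set I J)].

Definition principal_right (R : nzRingType) (a : R) : R -> Prop :=
  fun z => exists r, z = a * r.

Definition princ_nilpotent (R : nzRingType) (a : R) : Prop :=
  right_ideal (principal_right a) /\ nil_set (principal_right a).

Definition subring_set (R : nzRingType) (S : R -> Prop) : Prop :=
  [/\ S 1, (forall x y, S x -> S y -> S (x - y)) & (forall x y, S x -> S y -> S (x * y))].

(* R is generated as a Z-algebra (= as a unital ring) by a and b: every element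
   lies in every subring containing a and b. *)
Definition Zalg_generated (R : nzRingType) (a b : R) : Prop :=
  forall x : R, forall S : R -> Prop, subring_set S -> S a -> S b -> S x.

(* subalgebra over Z_p (for a ring with p 1 = 0): a subring closed under the
   Z_p-action; the Z_p action is by the images of integers, so closed automatically,
   but we spell it out. *)
Definition Zp_subalg (p : nat) (R : nzRingType) (S : R -> Prop) : Prop :=
  subring_set S /\ (forall (k : nat) x, S x -> S (x *+ (k %% p))).

Definition Zpalg_generated (p : nat) (R : nzRingType) (a b : R) : Prop :=
  forall x : R, forall S : R -> Prop, Zp_subalg p S -> S a -> S b -> S x.

(* Main.v *)
Require Import Defs.
From HB Require Import structures.
From mathcomp Require Import all_boot all_order all_algebra.
From Stdlib Require Import ClassicalEpsilon Classical.
Local Open Scope ring_scope.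
Import GRing.Theory.

Section Gen.
Variables (R : nzRingType) (a b : R).

Definition genP (x : R) : Prop :=
  forall S : R -> Prop, subring_set S -> S a -> S b -> S x.

Definition pb (x : R) : bool :=
  if excluded_middle_informative (genP x) then true else false.

Lemma pbP x : reflect (genP x) (pb x).
Proof. rewrite /pb; case: excluded_middle_informative => h; by constructor. Qed.

Lemma pb_subring : subring_closed pb.
Proof.
split.
- by apply/pbP => S [] .
- move=> x y /pbP hx /pbP hy; apply/pbP => S hS ha hb.
  case: (hS) => _ hB _; exact: hB (hx S hS ha hb) (hy S hS ha hb).
- move=> x y /pbP hx /pbP hy; apply/pbP => S hS ha hb.
  case: (hS) => _ _ hM; exact: hM (hx S hS ha hb) (hy S hS ha hb).
Qed.

Record gen_sub := GenSub {gval : R; _ : pb gval}.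
HB.instance Definition _ := [isSub for gval].
HB.instance Definition _ := [Choice of gen_sub by <:].
HB.instance Definition _ := GRing.isSubringClosed.Build R pb pb_subring.
HB.instance Definition _ := [SubChoice_isSubNzRing of gen_sub by <:].

Lemma pba : pb a. Proof. by apply/pbP => S _ ha _. Qed.
Lemma pbb : pb b. Proof. by apply/pbP => S _ _ hb. Qed.

Definition ga : gen_sub := @GenSub a pba.
Definition gb : gen_sub := @GenSub b pbb.

Lemma gval_exp (x : gen_sub) n : gval (x ^+ n) = gval x ^+ n.
Proof. exact: (rmorphXn (val : gen_sub -> R)). Qed.

End Gen.
Arguments gen_sub {R}.
Arguments gval {R a b}.
Arguments ga {R}.
Arguments gb {R}.
Arguments pb {R}.
Arguments gval_exp {R a b}.

Lemma princ_right_ideal (A : nzRingType) (a : A) : right_ideal (principal_right a).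
Proof.
split.
- by exists 0; rewrite mulr0.
- move=> x y [r ->] [s ->]; exists (r - s); by rewrite mulrBr.
- move=> x t [r ->]; exists (r * t); by rewrite mulrA.
Qed.

Section Main.
Variables (R : nzRingType) (x y : R).
Local Notation A := (gen_sub x y).

Lemma gvalM (u v : A) : gval (u * v) = gval u * gval v.
Proof. exact: (rmorphM (val : A -> R)). Qed.
Lemma gvalD (u v : A) : gval (u + v) = gval u + gval v.
Proof. exact: (rmorphD (val : A -> R)). Qed.
Lemma gvalB (u v : A) : gval (u - v) = gval u - gval v.
Proof. exact: (rmorphB (val : A -> R)). Qed.
Lemma gval1 : gval (1 : A) = 1.
Proof. exact: (rmorph1 (val : A -> R)). Qed.
Lemma gval0 : gval (0 : A) = 0.
Proof. exact: (rmorph0 (val : A -> R)). Qed.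

Lemma nil_transfer (u : A) (I : R -> Prop) : right_ideal I -> nil_set I ->
  I (gval u) -> nil_set (principal_right u).
Proof.
move=> [_ _ hM] hnil hu z [r ->].
have [n hn] := hnil _ (hM _ (gval r) hu).
exists n; apply: val_inj; rewrite /= gval_exp gvalM hn.
by rewrite -gval0.
Qed.

Lemma gen_all : Zalg_generated (ga x y) (gb x y).
Proof.
move=> u S [h1 hB hM] Sa Sb.
pose S' := fun r : R => exists h : pb x y r, S (@GenSub R x y r h).
have of_S : forall v : A, S v -> S' (gval v).
  move=> [r hr] Sv; by exists hr.
have to_S : forall v : A, S' (gval v) -> S v.
  move=> [r hr] [h' Sh]; by rewrite (bool_irrelevance hr h').
apply: (to_S).
have := valP u => /pbP; apply.
- split.
  + rewrite -gval1; exact: (of_S _ h1).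
  + move=> r s /[dup] [[hr _]] Sr /[dup] [[hs _]] Ss.
    have -> : r - s = gval (@GenSub R x y r hr - @GenSub R x y s hs) by rewrite gvalB.
    apply: (of_S); apply: hB; exact: (to_S).
  + move=> r s /[dup] [[hr _]] Sr /[dup] [[hs _]] Ss.
    have -> : r * s = gval (@GenSub R x y r hr * @GenSub R x y s hs) by rewrite gvalM.
    apply: (of_S); apply: hM; exact: (to_S).
- exact: (of_S _ Sa).
- exact: (of_S _ Sb).
Qed.
End Main.

Theorem mainTheorem4 :
  (exists R : nzRingType, NK R) ->
  exists (A : nzRingType) (a b : A),
    [/\ princ_nilpotent a, princ_nilpotent b,
        (Zalg_generated a b
         \/ exists p : nat, [/\ prime p, (p%:R : A) = 0 & Zpalg_generated p a b])
      & NK A].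
Proof.
move=> [R [I [J [hI hJ nI nJ nS]]]].
have [z [Sz nz]] : exists z, sum_set I J z /\ ~ nilpotent_el z.
  apply: NNPP => H; apply: nS => z Sz; apply: NNPP => nz; apply: H; by exists z.
move: Sz nz => [x [y [Ix Jy ->]]] nz.
exists (gen_sub x y), (ga x y), (gb x y).
have nA : nil_set (principal_right (ga x y)) by exact: (@nil_transfer R x y (ga x y) I hI nI Ix).
have nB : nil_set (principal_right (gb x y)) by exact: (@nil_transfer R x y (gb x y) J hJ nJ Jy).
split.
- split=> //; exact: princ_right_ideal.
- split=> //; exact: princ_right_ideal.
- left; exact: gen_all.
- exists (principal_right (ga x y)), (principal_right (gb x y)); split => //;
    try exact: princ_right_ideal.
  move=> H; apply: nz.
  have [|n hn] := H (ga x y + gb x y).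
    by exists (ga x y), (gb x y); split => //; exists 1; rewrite mulr1.
  exists n; have := congr1 gval hn; by rewrite gval_exp gvalD gval0.
Qed.
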